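(* Let $G\le\mathrm{Aut}(\mathcal{T}_d)$ be self-similar. Then $\kappa_k^n(S_n\wr G)\subseteq S_{n+d-1}\wr G$ for all $1\le k\le n$, so the classes $[T_-,g,T_+]$ with $g\in S_n\wr G$ form a subgroup $\mathscr{T}(S_*\wr G)$ of $\mathscr{T}(S_*\wr\mathrm{Aut}(\mathcal{T}_d))$, and the map $[T_-,g,T_+]\mapsto((T_-,g,T_+))$ restricts to an isomorphism $\mathscr{T}(S_*\wr G)\cong V_d(G)$.
   Context: Notation for trees, wreath products, wreath recursion, almost-automorphisms $((T_-,\sigma(f_1,\dots,f_n),T_+))$, $\mathrm{AAut}(\mathcal{T}_d)$, the cloning maps $\kappa_k^n$ and the construction $\mathscr{T}(S_*\wr G)$: Fix $d\ge2$, $X=\{1,\dots,d\}$, $\mathcal{T}_d$ the rooted $d$-ary tree on $X^*$. $S_n\wr G=S_n\ltimes G^n$ with $\sigma(f_1,\dots,f_n)\tau(g_1,\dots,g_n)=\sigma\tau(f_{\tau(1)}g_1,\dots,f_{\tau(n)}g_n)$ (permutations act on the left). Each $f\in\mathrm{Aut}(\mathcal{T}_d)$ has wreath recursion $f=\rho(f)(f_1,\dots,f_d)$ with $f(xw)=\rho(f)(x)f_x(w)$; $G$ is self-similar if all $f_x$ lie in $G$ for all $f\in G$, $x\in X$. For finite rooted complete subtrees $T_\pm$ with $n$ leaves ($u_i$ leaves of $T_-$, $v_i$ of $T_+$, ordered left to right), $((T_-,\sigma(f_1,\dots,f_n),T_+))$ is the homeomorphism of $\partial\mathcal{T}_d$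 with $v_iw\mapsto u_{\sigma(i)}f_i(w)$. $V_d(G)$ is the subgroup of $\mathrm{AAut}(\mathcal{T}_d)$ of all such homeomorphisms with all $f_i\in G$. The cloning map is $(\sigma(f_1,\dots,f_n))\kappa_k^n=(\sigma)\varsigma_k^n\rho(f_k)^{(k)}(f_1,\dots,f_{k-1},f_k^1,\dots,f_k^d,f_{k+1},\dots,f_n)$ where $f_k=\rho(f_k)(f_k^1,\dots,f_k^d)$, $\tau^{(k)}\in S_{n+d-1}$ acts as $k+j-1\mapsto k+\tau(j)-1$ on $\{k,\dots,k+d-1\}$ and trivially elsewhere, and $(\sigma)\varsigma_k^n\in S_{n+d-1}$ is the permutation obtained from $\sigma$ by replacing the point $k$ of the domain by the block $k,\dots,k+d-1$ and the point $\sigma(k)$ of the range by the block $\sigma(k),\dots,\sigma(k)+d-1$, mapping the block order-preservingly ($k+j\mapsto\sigma(k)+j$) and shifting other points to preserve their relative order. $\mathscr{T}(S_*\wr G)$ is the set of triples $(T_-,g,T_+)$ ($T_\pm$ with $n$ leaves, $g\in S_n\wr G$) modulo the equivalence generated by expansions $(T_-,g,T_+)\to(T_-',(g)\kappa_k^n,T_+')$ ($T_+'$: $d$-caret added at $k$th leaf of $T_+$; $T_-'$: $d$-caret added at $\rho_n(g)(k)$th leaf of $T_-$, where $\rho_n(\sigma(\vec g))=\sigma$), with product $[T_-,f,T_+][T_+,g,U_+]=[T_-,fg,U_+]$. *)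

(* Defs.v *)
From HB Require Import structures.
From mathcomp Require Import all_boot.
From Stdlib Require Import Relations.
Set Implicit Arguments. Unset Strict Implicit. Unset Printing Implicit Defensive.

(* Alphabet X = 'I_d (letters 0..d-1 stand for 1..d); vertices of T_d are  *)
(* words seq 'I_d; the boundary is nat -> 'I_d.                            *)

(* candidate tree maps; Aut(T_d) = those satisfying is_aut *)
Definition aut (d : nat) := seq 'I_d -> seq 'I_d.

Definition is_aut d (f : aut d) : Prop :=
  [/\ (forall w, size (f w) = size w),
      (forall w x, take (size w) (f (rcons w x)) = f w)
    & bijective f].

(* wreath recursion f = rho(f)(f_1,...,f_d):  f (x :: w) = rho f x :: f_x w *)
Definition rho d (f : aut d) (x : 'I_d) : 'I_d := head x (f [:: x]).
Definition section d (f : aut d) (x : 'I_d) : aut d := fun w => behead (f (x :: w)).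
(* rho on natural-number indices (identity outside 0..d-1) *)
Definition rhoN d (f : aut d) (j : nat) : nat :=
  match (insub j : option 'I_d) with Some x => val (rho f x) | None => j end.

Definition subgroup_aut d (G : aut d -> Prop) : Prop :=
  [/\ (forall f, G f -> is_aut f), G id,
      (forall f g, G f -> G g -> G (f \o g))
    & (forall f, G f -> exists g, [/\ G g, f \o g =1 id & g \o f =1 id])].

Definition self_similar d (G : aut d -> Prop) : Prop :=
  forall f x, G f -> G (section f x).

Inductive tree := Leaf | Node of seq tree.

Fixpoint wf_tree (d : nat) (T : tree) : bool :=
  match T with
  | Leaf => true
  | Node ts => (size ts == d) &&
      (fix aux ts := match ts with [::] => true | t :: ts' => wf_tree d t && aux ts' end) ts
  end.

Fixpoint leaves (d : nat) (T : tree) : seq (seq 'I_d) :=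
  match T with
  | Leaf => [:: [::]]
  | Node ts =>
      (fix aux (j : nat) (ts : seq tree) : seq (seq 'I_d) :=
         match ts with
         | [::] => [::]
         | t :: ts' =>
             match (insub j : option 'I_d) with
             | Some x => [seq x :: w | w <- leaves d t]
             | None => [::]
             end ++ aux j.+1 ts'
         end) 0 ts
  end.

(* add a d-caret at the k-th leaf (0-indexed, left to right) *)
Fixpoint addCaret (d : nat) (k : nat) (T : tree) : tree :=
  match T with
  | Leaf => if k == 0 then Node (nseq d Leaf) else Leaf
  | Node ts =>
      Node ((fix aux (k : nat) (ts : seq tree) : seq tree :=
               match ts with
               | [::] => [::]
               | t :: ts' =>
                   let m := size (leaves d t) in
                   if k < m then addCaret d k t :: ts' else t :: aux (k - m) ts'
               end) k ts)
  end.

(* Elements of S_n wr G: a permutation sigma of {0..n-1}, given as the     *)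
(* list of its values [sigma 0; ...; sigma (n-1)], and a list of n tree    *)
(* maps [f_0; ...; f_(n-1)] (0-indexed).                                   *)
Definition is_perm (n : nat) (s : seq nat) : bool := perm_eq s (iota 0 n).

Definition in_wr d (P : aut d -> Prop) (n : nat) (s : seq nat) (fs : seq (aut d)) : Prop :=
  [/\ is_perm n s, size fs = n & forall i, i < n -> P (nth id fs i)].

(* cloning map kappa_k^n (k 0-indexed): permutation part
   (sigma)varsigma_k^n composed (on the left action convention) with rho(f_k)^(k) *)
Definition clone_perm d (k : nat) (s : seq nat) (fs : seq (aut d)) : seq nat :=
  let sk := nth 0 s k in
  let sh j := if j < sk then j else j + d.-1 in
  let vs i := if i < k then sh (nth 0 s i)
              else if i < k + d then sk + (i - k)
              else sh (nth 0 s (i - d.-1)) in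
  let rk i := if (k <= i) && (i < k + d) then k + rhoN (nth id fs k) (i - k) else i in
  mkseq (fun i => vs (rk i)) (size s + d.-1).

Definition clone_maps d (k : nat) (fs : seq (aut d)) : seq (aut d) :=
  take k fs ++ [seq section (nth id fs k) x | x <- enum 'I_d] ++ drop k.+1 fs.

Record triple d := Triple { tm : tree; sg : seq nat; fs : seq (aut d); tp : tree }.
Arguments Triple {d}.

Definition valid_with d (P : aut d -> Prop) (x : triple d) : Prop :=
  [/\ wf_tree d (tm x), wf_tree d (tp x),
      size (leaves d (tm x)) = size (sg x),
      size (leaves d (tp x)) = size (sg x)
    & in_wr P (size (sg x)) (sg x) (fs x)].

Definition valid d (x : triple d) := valid_with (@is_aut d) x.

(* expansion at the k-th leaf of T_+ (k 0-indexed) *)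
Definition expand d (k : nat) (x : triple d) : triple d :=
  Triple (addCaret d (nth 0 (sg x) k) (tm x))
         (clone_perm k (sg x) (fs x))
         (clone_maps k (fs x))
         (addCaret d k (tp x)).

Definition expansion d (x y : triple d) : Prop :=
  valid x /\ exists k, k < size (sg x) /\ y = expand k x.

Definition equivT d : relation (triple d) := clos_refl_sym_trans _ (@expansion d).

(* [T_-, f, T_+][T_+, g, U_+] = [T_-, f g, U_+], with
   sigma(f) tau(g) = sigma tau (f_{tau(i)} g_i); maps compose as functions *)
Definition mult d (x y : triple d) : triple d :=
  Triple (tm x)
         (mkseq (fun i => nth 0 (sg x) (nth 0 (sg y) i)) (size (sg y)))
         (mkseq (fun i => nth id (fs x) (nth 0 (sg y) i) \o nth id (fs y) i) (size (sg y)))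
         (tp y).

Definition unitT d : triple d := Triple Leaf [:: 0] [:: id] Leaf.

Definition boundary d := nat -> 'I_d.

Definition bact d (f : aut d) (xi : boundary d) : boundary d :=
  fun m => nth (xi m) (f (mkseq xi m.+1)) m.

Definition bcat d (u : seq 'I_d) (eta : boundary d) : boundary d :=
  fun m => nth (eta (m - size u)) u m.

(* ((T_-, sigma(f_1..f_n), T_+)) : v_i w |-> u_{sigma(i)} f_i(w) *)
Definition homeo d (Tm : tree) (s : seq nat) (fs : seq (aut d)) (Tp : tree)
    (xi : boundary d) : boundary d :=
  let vs := leaves d Tp in
  let i := find (fun v => v == mkseq xi (size v)) vs in
  let v := nth [::] vs i in
  bcat (nth [::] (leaves d Tm) (nth 0 s i))
       (bact (nth id fs i) (fun m => xi (m + size v))).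

Definition Phi d (x : triple d) : boundary d -> boundary d :=
  homeo (tm x) (sg x) (fs x) (tp x).

Definition Vd d (G : aut d -> Prop) (h : boundary d -> boundary d) : Prop :=
  exists Tm Tp s fs, valid_with G (Triple Tm s fs Tp) /\ h = homeo Tm s fs Tp.

(* Main.v *)
Require Import Defs.
From mathcomp Require Import all_boot.
From Stdlib Require Import Relations.
From Stdlib Require Import FunctionalExtensionality.
From Stdlib Require List.
From mathcomp Require Import zify.
Set Implicit Arguments. Unset Strict Implicit. Unset Printing Implicit Defensive.

Fixpoint laux d (j : nat) (ts : seq tree) : seq (seq 'I_d) :=
  match ts with
  | [::] => [::]
  | t :: ts' => match (insub j : option 'I_d) with
               | Some x => [seq x :: w | w <- leaves d t] | None => [::] end ++ laux d j.+1 ts'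
  end.
Lemma leavesN d ts : leaves d (Node ts) = laux d 0 ts.
Proof. rewrite /=; move: 0; elim: ts => //= t ts IH j; by rewrite IH. Qed.
Fixpoint caux d (k : nat) (ts : seq tree) : seq tree :=
  match ts with
  | [::] => [::]
  | t :: ts' => let m := size (leaves d t) in
      if k < m then addCaret d k t :: ts' else t :: caux d (k - m) ts'
  end.
Lemma addCaretN d k ts : addCaret d k (Node ts) = Node (caux d k ts).
Proof. rewrite /=; congr Node; elim: ts k => //= t ts IH k; by rewrite IH. Qed.
Lemma wfN d ts : wf_tree d (Node ts) = (size ts == d) && all (wf_tree d) ts.
Proof. rewrite /=; congr andb; elim: ts => //= t ts IH; by rewrite IH. Qed.

Fixpoint tree_ind' (P : tree -> Prop) (hL : P Leaf)
  (hN : forall ts, (forall t, List.In t ts -> P t) -> P (Node ts)) (t : tree) : P t :=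
  match t with
  | Leaf => hL
  | Node ts => hN ts ((fix aux (ts : seq tree) : forall t, List.In t ts -> P t :=
       match ts with
       | [::] => fun t H => False_ind _ H
       | t0 :: ts0 => fun t H => match H with
                     | or_introl e => eq_ind t0 P (tree_ind' hL hN t0) t e
                     | or_intror H' => aux ts0 t H' end
       end) ts)
  end.

Definition pre d (xi : boundary d) : pred (seq 'I_d) := fun v => v == mkseq xi (size v).
Definition shb d (xi : boundary d) : boundary d := fun m => xi m.+1.

Lemma mkseqSl T (f : nat -> T) n : mkseq f n.+1 = f 0 :: mkseq (fun m => f m.+1) n.
Proof.
rewrite /mkseq /=; congr cons; elim: n 0 => //= n IH m; by rewrite IH.
Qed.

Lemma pre_cons d (xi : boundary d) x w : pre xi (x :: w) = (x == xi 0) && pre (shb xi) w.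
Proof. by rewrite /pre /= mkseqSl eqseq_cons. Qed.

Lemma pre_nil d (xi : boundary d) : pre xi [::].
Proof. by []. Qed.

Lemma In_all T (p : pred T) t ts : List.In t ts -> all p ts -> p t.
Proof. elim: ts => //= t0 ts IH [<- /andP[]|h /andP[_]] //; exact: IH. Qed.

Lemma count_laux d j ts (xi : boundary d) :
  (forall t, List.In t ts -> forall xi, count (pre xi) (leaves d t) = 1) ->
  j + size ts <= d ->
  count (pre xi) (laux d j ts) = (j <= xi 0 < j + size ts).
Proof.
elim: ts j => [|t ts IH] j H hs /=; first by rewrite addn0; case: (leqP j (xi 0)) => h //=; rewrite ltnNge h.
have hj : j < d by apply: leq_trans hs; rewrite addnS ltnS leq_addr.
rewrite insubT count_cat count_map.
rewrite (eq_count (a2 := fun w => (Ordinal hj == xi 0) && pre (shb xi) w)); last first.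
  by move=> w /=; rewrite pre_cons.
rewrite IH; [|by move=> t' ht'; apply: H; right| by rewrite addSnnS].
case: eqP => [<-|ne] /=.
  rewrite H; last by left.
  by rewrite leqnn ltnn /= addnS ltnS leq_addr.
rewrite (eq_count (a2 := pred0)) // count_pred0 add0n addSnnS.
have: j != xi 0 by apply/eqP=> e; apply: ne; apply: val_inj.
move=> hne; by rewrite ltn_neqAle hne.
Qed.

Lemma count_pre d (T : tree) (xi : boundary d) : wf_tree d T -> count (pre xi) (leaves d T) = 1.
Proof.
elim/tree_ind': T xi => [|ts IH] xi; first by [].
rewrite wfN leavesN => /andP [/eqP hs hw].
rewrite count_laux ?add0n ?hs ?leq0n ?ltn_ord //.
move=> t ht xi'; apply: IH => //.
by apply: (In_all ht).
Qed.

Lemma find_count1 T (p : pred T) (s : seq T) x0 i :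
  count p s = 1 -> i < size s -> p (nth x0 s i) -> find p s = i.
Proof.
elim: s i => [|a s IH] [|i] //= hc hi hp; first by rewrite hp.
have hs : 0 < count p s.
  by rewrite -has_count; apply/(has_nthP x0); exists i.
case ha: (p a) hc => /=; first by rewrite add1n => -[] h; move: hs; rewrite h.
by rewrite add0n => hc; rewrite (IH i).
Qed.

Lemma uniq_count1 (T : eqType) (s : seq T) : (forall x, count_mem x s <= 1) -> uniq s.
Proof.
elim: s => //= a s IH H; apply/andP; split; last first.
  apply: IH => x; apply: leq_trans (H x); rewrite /= leq_addl //.
apply/negP => ha; move: (H a) => /=; rewrite eqxx add1n ltnS leqn0.
have: 0 < count_mem a s by rewrite -has_count has_pred1.
by case: (count_mem a s).
Qed.

Lemma pre_bcat d (v : seq 'I_d) (eta : boundary d) : pre (bcat v eta) v.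
Proof.
case: v => [|x v] //; rewrite /pre; apply/eqP.
apply: (eq_from_nth (x0 := x)); rewrite ?size_mkseq // => i hi.
by rewrite nth_mkseq // /bcat; apply: set_nth_default.
Qed.

Lemma uniq_leaves d T : 0 < d -> wf_tree d T -> uniq (leaves d T).
Proof.
move=> hd hw; apply: uniq_count1 => v.
rewrite -(count_pre (bcat v (fun _ => Ordinal hd)) hw).
by apply: sub_count => w /= /eqP ->; apply: pre_bcat.
Qed.

Lemma find_leaves d T (xi : boundary d) i : wf_tree d T -> i < size (leaves d T) ->
  pre xi (nth [::] (leaves d T) i) -> find (pre xi) (leaves d T) = i.
Proof. by move=> hw hi hp; exact: (find_count1 (count_pre xi hw) hi hp). Qed.

Lemma find_leaves_lt d T (xi : boundary d) : wf_tree d T ->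
  find (pre xi) (leaves d T) < size (leaves d T) /\ pre xi (nth [::] (leaves d T) (find (pre xi) (leaves d T))).
Proof.
move=> hw; have hh : has (pre xi) (leaves d T) by rewrite has_count count_pre.
by split; [rewrite -has_find | apply: nth_find].
Qed.

Lemma laux_nseq d j m : j + m = d ->
  laux d j (nseq m Leaf) = [seq [:: x] | x <- drop j (enum 'I_d)].
Proof.
elim: m j => [|m IH] j /= hj.
  by rewrite drop_oversize // size_enum_ord -hj addn0.
have hjd : j < d by rewrite -hj addnS ltnS leq_addr.
rewrite insubT IH; last by rewrite addSnnS.
rewrite (drop_nth (Ordinal hjd)) ?size_enum_ord //=.
by congr (_ :: _); congr [:: _]; apply: val_inj; rewrite /= nth_enum_ord.
Qed.

Lemma drop_cat_le T n (s1 s2 : seq T) : n <= size s1 -> drop n (s1 ++ s2) = drop n s1 ++ s2.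
Proof.
rewrite drop_cat; case: ltnP => // h1 h2.
have e : n = size s1 by apply/eqP; rewrite eqn_leq h1 h2.
by rewrite e subnn drop0 drop_size.
Qed.

Definition caretL d (L : seq (seq 'I_d)) k :=
  take k L ++ [seq rcons (nth [::] L k) x | x <- enum 'I_d] ++ drop k.+1 L.

Definition caretP d t := forall k, k < size (leaves d t) ->
  wf_tree d (addCaret d k t) /\ leaves d (addCaret d k t) = caretL (leaves d t) k.

Lemma laux_caux d j ts k :
  (forall t, List.In t ts -> caretP d t) -> j + size ts <= d ->
  all (wf_tree d) ts -> k < size (laux d j ts) ->
  [/\ all (wf_tree d) (caux d k ts), size (caux d k ts) = size ts &
      laux d j (caux d k ts) = caretL (laux d j ts) k].
Proof.
elim: ts j k => [|t ts IH] j k //= H hs /andP [wt wts].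
have hj : j < d by apply: leq_trans hs; rewrite addnS ltnS leq_addr.
rewrite insubT /= size_cat size_map => hk.
case: (ltnP k (size (leaves d t))) => hm.
  have [w1 e1] := H t (or_introl erefl) k hm.
  rewrite /= w1 wts insubT e1; split => //.
  rewrite /caretL take_cat size_map hm nth_cat size_map hm drop_cat_le ?size_map //.
  rewrite (nth_map [::]) // !map_cat -!map_take -map_drop -!catA; congr (_ ++ _).
  by rewrite -map_comp; congr (_ ++ _); apply: eq_map => x /=; rewrite rcons_cons.
have h1 : j.+1 + size ts <= d by rewrite addSnnS.
have h2 : k - size (leaves d t) < size (laux d j.+1 ts) by rewrite ltn_subLR // addnC.
have [w1 e1 e2] := IH j.+1 (k - size (leaves d t)) (fun t h => H t (or_intror h)) h1 wts h2.
rewrite /= wt w1 e1 insubT; split => //.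
rewrite e2 /caretL take_cat size_map ltnNge hm /= nth_cat size_map ltnNge hm /=.
rewrite drop_cat size_map ltnNge (leq_trans hm) // subSn // !catA.
by [].
Qed.

Lemma leaves_addCaret d T : wf_tree d T -> caretP d T.
Proof.
elim/tree_ind': T => [|ts IH].
  move=> _ [|k] // _.
  have -> : addCaret d 0 Leaf = Node (nseq d Leaf) by [].
  rewrite wfN leavesN size_nseq eqxx all_nseq orbT laux_nseq //=; split => //.
  by rewrite /caretL /= drop0 cats0; apply: eq_map.
rewrite wfN => /andP [/eqP hs hw] k; rewrite leavesN => hk.
have H : forall t, List.In t ts -> caretP d t.
  by move=> t ht; apply: IH => //; apply: (In_all ht hw).
have [w1 e1 e2] := laux_caux H (eq_leq (etrans (add0n _) hs)) hw hk.
by rewrite addCaretN wfN leavesN e1 hs eqxx w1 e2.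
Qed.

Inductive Ref d : tree -> tree -> Prop :=
| Ref_refl T : Ref d T T
| Ref_step T k R : k < size (leaves d T) -> Ref d (addCaret d k T) R -> Ref d T R.

Lemma Ref_trans d T1 T2 T3 : Ref d T1 T2 -> Ref d T2 T3 -> Ref d T1 T3.
Proof. elim=> // U k R hk _ IH h; apply: Ref_step hk (IH h). Qed.

Lemma Ref_wf d T R0 : Ref d T R0 -> wf_tree d T -> wf_tree d R0.
Proof. elim=> // U k R1 hk _ IH hw; apply: IH; exact: (leaves_addCaret hw hk).1. Qed.

Lemma size_laux d j ts : j + size ts <= d ->
  size (laux d j ts) = sumn [seq size (leaves d t) | t <- ts].
Proof.
elim: ts j => //= t ts IH j hs.
have hj : j < d by apply: leq_trans hs; rewrite addnS ltnS leq_addr.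
by rewrite insubT size_cat size_map IH // addSnnS.
Qed.

Definition offs d (ts : seq tree) i := sumn [seq size (leaves d t) | t <- take i ts].

Lemma caux_off d ts i k : i < size ts -> k < size (leaves d (nth Leaf ts i)) ->
  caux d (offs d ts i + k) ts = set_nth Leaf ts i (addCaret d k (nth Leaf ts i)).
Proof.
rewrite /offs; elim: ts i => [|t ts IH] [|i] //= hi hk; first by rewrite hk.
rewrite -addnA ltnNge leq_addr /= addKn IH //.
Qed.

Lemma offs_lt d ts i k : i < size ts -> k < size (leaves d (nth Leaf ts i)) ->
  offs d ts i + k < sumn [seq size (leaves d t) | t <- ts].
Proof.
rewrite /offs; elim: ts i => [|t ts IH] [|i] //= hi hk.
  by apply: leq_trans (leq_addr _ _); rewrite add0n.
by rewrite -addnA ltn_add2l IH.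
Qed.

Lemma set_nth_nth' T (x0 : T) s i : i < size s -> set_nth x0 s i (nth x0 s i) = s.
Proof. by elim: s i => [|a s IH] [|i] //= h; rewrite IH. Qed.

Lemma Ref_child d ts i t : size ts = d -> i < d -> Ref d (nth Leaf ts i) t ->
  Ref d (Node ts) (Node (set_nth Leaf ts i t)).
Proof.
move=> hs hi h; have [t0 e] : exists t0, nth Leaf ts i = t0 by eexists.
rewrite e in h; move: e.
elim: h ts hs => [U|U k R hk _ IH] ts hs e.
  by rewrite -e set_nth_nth'; [apply: Ref_refl | rewrite hs].
apply: (Ref_step (k := offs d ts i + k)).
  by rewrite leavesN size_laux ?hs // offs_lt ?hs // e.
rewrite addCaretN caux_off ?hs ?e //.
have := IH (set_nth Leaf ts i (addCaret d k U)).
rewrite set_set_nth eqxx; apply.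
  by rewrite size_set_nth hs; apply/maxn_idPr.
by rewrite nth_set_nth /= eqxx.
Qed.

Lemma Ref_children d ts ts' : size ts = d -> size ts' = d ->
  (forall i, i < d -> Ref d (nth Leaf ts i) (nth Leaf ts' i)) -> Ref d (Node ts) (Node ts').
Proof.
move=> hs hs' H.
suff: forall m, m <= d -> Ref d (Node ts) (Node (take m ts' ++ drop m ts)).
  by move/(_ d (leqnn d)); rewrite drop_oversize ?hs // cats0 take_oversize ?hs'.
elim=> [|m IH] hm; first by rewrite take0 drop0; apply: Ref_refl.
apply: Ref_trans (IH (ltnW hm)) _.
have e : take m.+1 ts' ++ drop m.+1 ts =
    set_nth Leaf (take m ts' ++ drop m ts) m (nth Leaf ts' m).
  apply: (eq_from_nth (x0 := Leaf)).
    rewrite size_set_nth !size_cat !size_takel ?hs' // ?size_drop ?hs; lia.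
  move=> j _; rewrite nth_set_nth /= !nth_cat !size_takel ?hs' //; last by lia.
  case: (ltngtP j m) => hj.
  - have -> : j < m.+1 by lia.
    rewrite nth_take; last lia. by rewrite nth_take.
  - have -> : (j < m.+1) = false by lia.
    rewrite !nth_drop; congr nth; lia.
  - by rewrite hj ltnSn nth_take.
rewrite e; apply: Ref_child => //.
  rewrite size_cat size_takel ?size_drop; lia.
rewrite nth_cat size_takel ?hs'; last by lia.
rewrite ltnn subnn nth_drop addn0; exact: H.
Qed.



Lemma In_nth T (x0 : T) s i : i < size s -> List.In (nth x0 s i) s.
Proof. by elim: s i => [|a s IH] [|i] //= h; [left|right; apply: IH]. Qed.

Lemma all_nth' T (p : pred T) x0 s i : all p s -> i < size s -> p (nth x0 s i).
Proof. elim: s i => [|a s IH] [|i] //= /andP [h1 h2] h //; exact: IH. Qed.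

Lemma Ref_leaf d R : wf_tree d R -> Ref d Leaf R.
Proof.
elim/tree_ind': R => [|ts IH]; first by move=> _; apply: Ref_refl.
rewrite wfN => /andP [/eqP hs hw].
apply: (Ref_step (k := 0)) => //.
apply: Ref_children => //; first by rewrite size_nseq.
move=> i hi; rewrite nth_nseq hi; apply: IH; first by apply: In_nth; rewrite hs.
by apply: all_nth'; rewrite ?hs.
Qed.

Lemma exists_list T (x0 : T) n (P : nat -> T -> Prop) :
  (forall i, i < n -> exists t, P i t) -> exists ts, size ts = n /\ forall i, i < n -> P i (nth x0 ts i).
Proof.
elim: n P => [|n IH] P H; first by exists [::].
have [t ht] := H 0 (ltn0Sn n).
have [ts [h1 h2]] := IH (fun i => P i.+1) (fun i hi => H i.+1 hi).
by exists (t :: ts); split => [|[|i] hi] //=; [rewrite h1 | apply: h2].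
Qed.

Lemma common_ref d T1 T2 : wf_tree d T1 -> wf_tree d T2 ->
  exists R, Ref d T1 R /\ Ref d T2 R.
Proof.
elim/tree_ind': T1 T2 => [|ts IH] T2 h1 h2.
  by exists T2; split; [apply: Ref_leaf | apply: Ref_refl].
case: T2 h2 => [|ts'] h2.
  by exists (Node ts); split; [apply: Ref_refl | apply: Ref_leaf].
move: h1 h2; rewrite !wfN => /andP [/eqP hs hw] /andP [/eqP hs' hw'].
have H : forall i, i < d -> exists R, Ref d (nth Leaf ts i) R /\ Ref d (nth Leaf ts' i) R.
  move=> i hi; apply: IH; first by apply: In_nth; rewrite hs.
    by apply: all_nth'; rewrite ?hs.
  by apply: all_nth'; rewrite ?hs'.
have [Rs [hR1 hR2]] := exists_list Leaf H.
exists (Node Rs); split; apply: Ref_children => // i hi; by case: (hR2 i hi).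
Qed.

Lemma laux_nonnil d j ts w : w \in laux d j ts -> w != [::].
Proof.
elim: ts j => //= t ts IH j; rewrite mem_cat => /orP [|/IH //].
by case: insub => //= x /mapP [w' _ ->].
Qed.

Lemma filter_laux d j ts (x : 'I_d) : j + size ts <= d ->
  [seq behead w | w <- laux d j ts & ohead w == Some x] =
  if (j <= x) && (x < j + size ts) then leaves d (nth Leaf ts (x - j)) else [::].
Proof.
elim: ts j => [|t ts IH] j hs /=.
  by rewrite addn0; case: (leqP j x) => h //=; rewrite ltnNge h.
have hj : j < d by apply: leq_trans hs; rewrite addnS ltnS leq_addr.
rewrite insubT filter_cat map_cat IH; last by rewrite addSnnS.
rewrite filter_map -map_comp /=.
case: (ltngtP j x) => h.
- rewrite (eq_filter (a2 := pred0)); last first.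
    move=> w /=; apply/eqP => -[] e; move: h; rewrite -e /= ltnn //.
  by rewrite filter_pred0 /= addSnnS -(subnSK h).
- rewrite (eq_filter (a2 := pred0)); last first.
    move=> w /=; apply/eqP => -[] e; move: h; rewrite -e /= ltnn //.
  by rewrite filter_pred0.
- rewrite (eq_filter (a2 := predT)); last first.
    by move=> w /=; apply/eqP; congr Some; apply: val_inj.
  by rewrite filter_predT map_id -h subnn /= addnS ltnS leq_addr cats0.
Qed.

Lemma leaves_inj d T1 T2 : wf_tree d T1 -> wf_tree d T2 ->
  perm_eq (leaves d T1) (leaves d T2) -> T1 = T2.
Proof.
elim/tree_ind': T1 T2 => [|ts IH] [|ts'] //.
- move=> _ _; rewrite leavesN => hp.
  have : [::] \in laux d 0 ts' by rewrite -(perm_mem hp) inE.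
  by move/laux_nonnil.
- move=> _ _; rewrite leavesN => hp.
  have : [::] \in laux d 0 ts by rewrite (perm_mem hp) inE.
  by move/laux_nonnil.
rewrite !wfN => /andP [/eqP hs hw] /andP [/eqP hs' hw']; rewrite !leavesN => hp.
congr Node; apply: (eq_from_nth (x0 := Leaf)); first by rewrite hs hs'.
move=> i; rewrite hs => hi.
apply: IH; [by apply: In_nth; rewrite hs | by apply: all_nth'; rewrite ?hs
           | by apply: all_nth'; rewrite ?hs' |].
have := perm_map behead (perm_filter (fun w => ohead w == Some (Ordinal hi)) hp).
by rewrite !filter_laux ?hs ?hs' //= add0n hi subn0.
Qed.

Section AutLemmas.
Variable d : nat.

Lemma aut_take (f : aut d) : is_aut f -> forall w m, f (take m w) = take m (f w).
Proof.
case=> hs hp _; elim/last_ind => [|w x IH] m; first by rewrite /= (size0nil (hs [::])).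
case: (leqP m (size w)) => hm.
  rewrite -cats1 takel_cat // cats1 IH -(hp w x) take_takel //.
rewrite !take_oversize // ?hs size_rcons //.
Qed.

Lemma mkseq_bcat (w : seq 'I_d) eta m : m <= size w -> mkseq (bcat w eta) m = take m w.
Proof.
move=> hm; case: w hm => [|x w] hm; first by move: hm; rewrite leqn0 => /eqP ->.
apply: (eq_from_nth (x0 := x)); first by rewrite size_mkseq size_takel.
by move=> i; rewrite size_mkseq => hi; rewrite nth_mkseq // nth_take // /bcat; apply: set_nth_default; apply: leq_trans hm.
Qed.

Lemma bcat_mkseq (eta : boundary d) n : bcat (mkseq eta n) (fun p => eta (p + n)) = eta.
Proof.
apply: functional_extensionality => m; rewrite /bcat size_mkseq.
case: (ltnP m n) => h; first by rewrite nth_mkseq.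
by rewrite nth_default ?size_mkseq // subnK.
Qed.

Lemma bact_bcat (f : aut d) w eta : is_aut f -> mkseq (bact f (bcat w eta)) (size w) = f w.
Proof.
move=> ha; have [hs _ _] := ha.
case e: w => [|x w']; first by apply/esym/size0nil; rewrite hs.
rewrite -e; apply: (eq_from_nth (x0 := x)); first by rewrite size_mkseq hs.
move=> i; rewrite size_mkseq => hi; rewrite nth_mkseq // /bact mkseq_bcat //.
rewrite aut_take // nth_take //; apply: set_nth_default; by rewrite hs.
Qed.

Lemma mkseq_bact (f : aut d) eta n : is_aut f -> mkseq (bact f eta) n = f (mkseq eta n).
Proof.
move=> ha; transitivity (mkseq (bact f (bcat (mkseq eta n) (fun p => eta (p + n)))) (size (mkseq eta n))).
  by rewrite bcat_mkseq size_mkseq.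
by rewrite bact_bcat.
Qed.

Lemma bact_comp (f g : aut d) eta : is_aut f -> is_aut g ->
  bact (f \o g) eta = bact f (bact g eta).
Proof.
move=> hf hg; apply: functional_extensionality => m.
rewrite /bact /= mkseq_bact //; apply: set_nth_default.
by have [hs _ _] := hf; have [hs' _ _] := hg; rewrite hs hs' size_mkseq.
Qed.

Lemma bact_id eta : bact (@id (seq 'I_d)) eta = eta.
Proof. by apply: functional_extensionality => m; rewrite /bact nth_mkseq. Qed.

Lemma aut_cons (f : aut d) x w : is_aut f -> f (x :: w) = rho f x :: section f x w.
Proof.
move=> ha; have [hs _ _] := ha.
have h1 := aut_take ha (x :: w) 1; rewrite /= take0 in h1.
rewrite /section /rho; case e: (f (x :: w)) => [|y w'].
  by move: (hs (x :: w)); rewrite e.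
rewrite e /= in h1; rewrite h1 /=; by [].
Qed.

Lemma aut_single (f : aut d) x : is_aut f -> f [:: x] = [:: rho f x].
Proof.
move=> ha; have [hs _ _] := ha.
rewrite (aut_cons x [::] ha); congr cons; apply: size0nil.
by rewrite /section size_behead hs.
Qed.

Lemma aut_inv (f g : aut d) : is_aut f -> cancel f g -> cancel g f -> is_aut g.
Proof.
move=> ha fK gK; have [hs hp _] := ha.
have hsg : forall w, size (g w) = size w by move=> w; rewrite -{2}(gK w) hs.
have htg : forall w m, g (take m w) = take m (g w).
  move=> w m; apply: (can_inj fK); rewrite gK aut_take // gK //.
split => //; last by exists f.
by move=> w x; rewrite -htg -cats1 takel_cat // take_size.
Qed.

Lemma section_aut (f : aut d) x : is_aut f -> is_aut (section f x).
Proof.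
move=> ha; have [hs hp [g fK gK]] := ha.
have hg := aut_inv ha fK gK.
have rK : rho g (rho f x) = x.
  have e1 : f [:: x] = [:: rho f x].
    rewrite (aut_cons x [::] ha); congr cons; apply: size0nil.
    by rewrite /section size_behead hs.
  by rewrite {1}/rho -e1 fK.
split.
- by move=> w; rewrite /section size_behead hs.
- move=> w y; rewrite /section -rcons_cons.
  have := hp (x :: w) y => /= <-.
  by case: (f _) => //= a s; rewrite take_cons.
- exists (section g (rho f x)).
  + move=> w; rewrite /section.
    have e : rho f x :: behead (f (x :: w)) = f (x :: w) by rewrite (aut_cons x w ha).
    by rewrite e fK.
  + move=> w; rewrite /section.
    have e : g (rho f x :: w) = x :: behead (g (rho f x :: w)) by rewrite aut_cons // rK.
    by rewrite -e gK.
Qed.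

Lemma rho_inj (f : aut d) : is_aut f -> injective (rho f).
Proof.
move=> ha x y e; have [hs hp [g fK gK]] := ha.
have := fK [:: x]; rewrite aut_single // e -aut_single // fK.
by case.
Qed.

End AutLemmas.

Section VS.
Variables (n d k : nat) (σ : nat -> nat).
Hypotheses (hd : 0 < d) (hk : k < n) (hb : forall i, i < n -> σ i < n)
  (hi : forall i j, i < n -> j < n -> σ i = σ j -> i = j).
Let sh j := if j < σ k then j else j + d.-1.
Let p i := if i < k then i else i - d.-1.
Let inB i := (k <= i) && (i < k + d).
Let vs i := if i < k then sh (σ i) else if i < k + d then σ k + (i - k) else sh (σ (i - d.-1)).

Lemma sh_inj x y : sh x = sh y -> x = y.
Proof. rewrite /sh; do 2![case: ifP => ?]; lia. Qed.
Lemma sh_out x : x != σ k -> ~~ ((σ k <= sh x) && (sh x < σ k + d)).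
Proof. rewrite /sh; case: ifP => ?; lia. Qed.
Lemma vs_out i : ~~ inB i -> vs i = sh (σ (p i)).
Proof. rewrite /vs /p /inB; case: ifP => // ?; case: ifP => //; lia. Qed.
Lemma p_ne i : i < n + d.-1 -> ~~ inB i -> p i < n /\ p i != k.
Proof. rewrite /p /inB; case: ifP => ?; lia. Qed.
Lemma p_inj i j : ~~ inB i -> ~~ inB j -> p i = p j -> i = j.
Proof. rewrite /p /inB; do 2![case: ifP => ?]; lia. Qed.
Lemma vs_in i : inB i -> vs i = σ k + (i - k).
Proof. rewrite /vs /inB; case: ifP => ?; [lia|]; case: ifP => //; lia. Qed.

Lemma vs_bound i : i < n + d.-1 -> vs i < n + d.-1.
Proof.
move=> h; case hB: (inB i).
  rewrite (@vs_in i hB); have := hb hk; move: hB; rewrite /inB; lia.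
rewrite (@vs_out i (negbT hB)); have [h1 _] := @p_ne i h (negbT hB).
have := hb h1; rewrite /sh; case: ifP => ?; lia.
Qed.

Lemma vs_inj i j : i < n + d.-1 -> j < n + d.-1 -> vs i = vs j -> i = j.
Proof.
move=> hni hnj; case hBi: (inB i); case hBj: (inB j).
- rewrite (@vs_in i hBi) (@vs_in j hBj); move: hBi hBj; rewrite /inB; lia.
- rewrite (@vs_in i hBi) (@vs_out j (negbT hBj)) => e.
  have [h1 h2] := @p_ne j hnj (negbT hBj).
  have : σ (p j) != σ k by apply/eqP => /(hi h1 hk) /eqP; rewrite (negbTE h2).
  move/sh_out; rewrite -e; move: hBi; rewrite /inB; lia.
- rewrite (@vs_in j hBj) (@vs_out i (negbT hBi)) => e.
  have [h1 h2] := @p_ne i hni (negbT hBi).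
  have : σ (p i) != σ k by apply/eqP => /(hi h1 hk) /eqP; rewrite (negbTE h2).
  move/sh_out; rewrite e; move: hBj; rewrite /inB; lia.
- rewrite (@vs_out i (negbT hBi)) (@vs_out j (negbT hBj)) => /sh_inj.
  have [h1 _] := @p_ne i hni (negbT hBi); have [h2 _] := @p_ne j hnj (negbT hBj).
  move/(hi h1 h2); apply: p_inj; by rewrite ?hBi ?hBj.
Qed.
End VS.

Section RK.
Variables (N d k : nat) (r : nat -> nat).
Hypotheses (hN : k + d <= N) (hb : forall j, j < d -> r j < d)
  (hi : forall i j, i < d -> j < d -> r i = r j -> i = j).
Let rk i := if (k <= i) && (i < k + d) then k + r (i - k) else i.
Lemma rk_bound i : i < N -> rk i < N.
Proof. rewrite /rk; case: ifP => // /andP [h1 h2] _; have := @hb (i - k); lia. Qed.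
Lemma rk_inj i j : rk i = rk j -> i = j.
Proof.
rewrite /rk; case: ifP => /andP; case: ifP => /andP.
- move=> [h1 h2] [h3 h4] e; have := @hi (i - k) (j - k); have := @hb (i - k); have := @hb (j - k); lia.
- move=> h [h3 h4] e; have := @hb (i - k); lia.
- move=> [h1 h2] h e; have := @hb (j - k); lia.
- by [].
Qed.
End RK.

Lemma is_permP n s : is_perm n s <-> [/\ uniq s, size s = n & forall i, i \in s -> i < n].
Proof.
rewrite /is_perm; split.
  move=> hp; split; first by rewrite (perm_uniq hp) iota_uniq.
    by rewrite (perm_size hp) size_iota.
  by move=> i; rewrite (perm_mem hp) mem_iota.
move=> [hu hs hb]; apply: uniq_perm => //; first exact: iota_uniq.
have h1 : {subset s <= iota 0 n} by move=> i hi; rewrite mem_iota /= hb.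
have h2 : size (iota 0 n) <= size s by rewrite size_iota hs.
by have [_ e] := uniq_min_size hu h1 h2.
Qed.

Lemma rhoN_ord d (f : aut d) (x : 'I_d) : rhoN f x = rho f x.
Proof. by rewrite /rhoN valK. Qed.

Lemma rhoN_bound d (f : aut d) j : j < d -> rhoN f j < d.
Proof. by move=> hj; rewrite /rhoN (insubT (fun x => x < d) hj) /= ltn_ord. Qed.

Lemma rhoN_inj d (f : aut d) i j : is_aut f -> i < d -> j < d -> rhoN f i = rhoN f j -> i = j.
Proof.
move=> ha hi hj; rewrite /rhoN (insubT (fun x => x < d) hi) (insubT (fun x => x < d) hj) /= => e.
have := rho_inj ha (val_inj e); by move=> /(congr1 val).
Qed.

Lemma clone_perm_ok d k s (fs : seq (aut d)) : 0 < d -> is_perm (size s) s -> k < size s ->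
  is_aut (nth id fs k) -> is_perm (size s + d.-1) (clone_perm k s fs).
Proof.
move=> hd hp hk ha; have [hu _ hb] := (is_permP _ _).1 hp.
set n := size s in hk hb *.
have hb' : forall i, i < n -> nth 0 s i < n by move=> i hi; apply: hb; apply: mem_nth.
have hi' : forall i j, i < n -> j < n -> nth 0 s i = nth 0 s j -> i = j.
  by move=> i j hi hj /eqP; rewrite nth_uniq // => /eqP.
have hN : k + d <= n + d.-1 by lia.
have rb : forall j, j < d -> rhoN (nth id fs k) j < d by move=> j; apply: rhoN_bound.
have ri : forall i j, i < d -> j < d -> rhoN (nth id fs k) i = rhoN (nth id fs k) j -> i = j.
  by move=> i j; apply: rhoN_inj.
apply/is_permP; rewrite /clone_perm -/n; split.
- apply/mkseq_uniqP => i j; rewrite !inE => hi hj e.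
  apply: (rk_inj hN rb ri).
  apply: (vs_inj hd hk hi' _ _ e); exact: rk_bound.
- by rewrite size_mkseq.
- move=> y /mapP [i]; rewrite mem_iota add0n => /andP [_ hi] ->.
  apply: (vs_bound hd hk hb'); exact: rk_bound.
Qed.


Lemma size_clone_maps d k (fs : seq (aut d)) : 0 < d -> k < size fs ->
  size (clone_maps k fs) = size fs + d.-1.
Proof.
move=> hd hk; rewrite /clone_maps !size_cat size_takel; last exact: ltnW.
rewrite size_map size_enum_ord size_drop; lia.
Qed.

Lemma nth_clone_maps d k (fs : seq (aut d)) i : k < size fs -> 0 < d ->
  nth id (clone_maps k fs) i =
  if i < k then nth id fs i
  else if i < k + d then (if insub (i - k) is Some x then section (nth id fs k) x else id)
  else nth id fs (i - d.-1).
Proof.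
move=> hk hd; rewrite /clone_maps nth_cat size_takel; last exact: ltnW.
case: ifP => h1; first by rewrite nth_take.
rewrite nth_cat size_map size_enum_ord.
case: ifP => h2.
  have h3 : i - k < d by lia.
  rewrite ifT; last by lia.
  rewrite (nth_map (Ordinal h3)) ?size_enum_ord // (insubT (fun x => x < d) h3) /=.
  by congr section; apply: val_inj; rewrite /= nth_enum_ord.
rewrite ifF; last by lia.
rewrite nth_drop; congr nth; lia.
Qed.

Lemma clone_in_wr d (P : aut d -> Prop) n s fs k : 0 < d ->
  (forall f, P f -> is_aut f) -> (forall f x, P f -> P (section f x)) ->
  in_wr P n s fs -> k < n -> in_wr P (n + d.-1) (clone_perm k s fs) (clone_maps k fs).
Proof.
move=> hd hPa hPs [hp hsz hP] hk.
have [_ hs _] := (is_permP _ _).1 hp.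
split.
- rewrite -{1}hs; apply: clone_perm_ok; rewrite ?hs //; by apply: hPa; apply: hP.
- by rewrite size_clone_maps ?hsz.
- move=> i hi; rewrite nth_clone_maps ?hsz //.
  case: ifP => h1; first by apply: hP; lia.
  case: ifP => h2; last by apply: hP; lia.
  have h3 : i - k < d by lia.
  rewrite (insubT (fun x => x < d) h3); apply: hPs; exact: hP.
Qed.

Lemma homeo_at d Tm s (fs : seq (aut d)) Tp xi i : wf_tree d Tp -> i < size (leaves d Tp) ->
  pre xi (nth [::] (leaves d Tp) i) ->
  homeo Tm s fs Tp xi = bcat (nth [::] (leaves d Tm) (nth 0 s i))
      (bact (nth id fs i) (fun m => xi (m + size (nth [::] (leaves d Tp) i)))).
Proof.
move=> hw hi hp; rewrite /homeo.
have e : find (fun v => v == mkseq xi (size v)) (leaves d Tp) = i by exact: find_leaves.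
by rewrite e.
Qed.

Lemma homeo_ex d Tp (xi : boundary d) : wf_tree d Tp ->
  exists i, i < size (leaves d Tp) /\ pre xi (nth [::] (leaves d Tp) i).
Proof. move=> hw; have [h1 h2] := find_leaves_lt xi hw; by eexists; split; eauto. Qed.

Lemma bcat_shift d (u : seq 'I_d) e : (fun m => bcat u e (m + size u)) = e.
Proof.
apply: functional_extensionality => m; rewrite /bcat nth_default ?addnK //.
by rewrite leq_addl.
Qed.

Definition consb d (a : 'I_d) (e : boundary d) : boundary d :=
  fun m => if m is m'.+1 then e m' else a.

Lemma bcat_rcons d (u : seq 'I_d) a e : bcat (rcons u a) e = bcat u (consb a e).
Proof.
apply: functional_extensionality => m; rewrite /bcat nth_rcons size_rcons.
case: (ltngtP m (size u)) => h.
- by apply: set_nth_default.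
- rewrite nth_default; last by apply: ltnW.
  rewrite /consb; case e1: (m - size u) => [|p]; first by lia.
  by congr e; lia.
- by rewrite h nth_default // subnn.
Qed.

Lemma bact_cons d (f : aut d) eta : is_aut f ->
  bact f eta = consb (rho f (eta 0)) (bact (section f (eta 0)) (fun m => eta m.+1)).
Proof.
move=> ha; apply: functional_extensionality => [[|m]] /=.
  by rewrite /bact /= aut_single.
by rewrite /bact mkseqSl aut_cons.
Qed.

Lemma nth_caretL d (L : seq (seq 'I_d)) k i : 0 < d -> k < size L ->
  nth [::] (caretL L k) i =
  if i < k then nth [::] L i
  else if i < k + d then (if insub (i - k) is Some x then rcons (nth [::] L k) x else [::])
  else nth [::] L (i - d.-1).
Proof.
move=> hd hk; rewrite /caretL nth_cat size_takel; last exact: ltnW.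
case: (ltnP i k) => h1; first by rewrite nth_take.
rewrite nth_cat size_map size_enum_ord.
case: (ltnP (i - k) d) => h2.
  rewrite ifT; last by lia.
  rewrite (nth_map (Ordinal h2)) ?size_enum_ord // (insubT (fun x => x < d) h2) /=.
  by congr rcons; apply: val_inj; rewrite /= nth_enum_ord.
rewrite ifF; last by lia.
  rewrite nth_drop; congr nth; lia.
Qed.

Lemma size_caretL d (L : seq (seq 'I_d)) k : 0 < d -> k < size L -> size (caretL L k) = size L + d.-1.
Proof.
move=> hd hk; rewrite /caretL !size_cat size_takel; last exact: ltnW.
rewrite size_map size_enum_ord size_drop; lia.
Qed.

Lemma nth_caretL_sh d (L : seq (seq 'I_d)) k j : 0 < d -> k < size L -> j != k ->
  nth [::] (caretL L k) (if j < k then j else j + d.-1) = nth [::] L j.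
Proof.
move=> hd hk hj; rewrite nth_caretL //.
case: (ltnP j k) => h; first by rewrite h.
have -> : (j + d.-1 < k) = false by lia.
have -> : (j + d.-1 < k + d) = false by lia.
by rewrite addnK.
Qed.

Lemma valid_unpack d (x : triple d) : valid x ->
  [/\ wf_tree d (tm x), wf_tree d (tp x), size (leaves d (tm x)) = size (sg x),
      size (leaves d (tp x)) = size (sg x) & in_wr (@is_aut d) (size (sg x)) (sg x) (fs x)].
Proof. by case. Qed.

Lemma Phi_expand d (x : triple d) k : 0 < d -> valid x -> k < size (sg x) -> Phi (expand k x) = Phi x.
Proof.
case: x => Tm s fs Tp hd; rewrite /valid /Phi /expand /=.
move=> [hwm hwp hlm hlp [hp hsz ha]] hk.
have [hu _ hb] := (is_permP _ _).1 hp.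
set n := size s in hlm hlp hk hb hsz ha *.
set sk := nth 0 s k.
have hsk : sk < n by apply: hb; apply: mem_nth.
have hi' : forall i j, i < n -> j < n -> nth 0 s i = nth 0 s j -> i = j.
  by move=> i j hi hj /eqP; rewrite nth_uniq // => /eqP.
have hkp : k < size (leaves d Tp) by rewrite hlp.
have hkm : sk < size (leaves d Tm) by rewrite hlm.
have [hwp' elp] := leaves_addCaret hwp hkp.
have [hwm' elm] := leaves_addCaret hwm hkm.
have hszp : size (leaves d (addCaret d k Tp)) = n + d.-1 by rewrite elp size_caretL // hlp.
have hkf : k < size fs by rewrite hsz.
apply: functional_extensionality => xi.
have [i [hi hpre]] := homeo_ex xi hwp.
rewrite hlp in hi.
rewrite (homeo_at _ _ _ hwp _ hpre); last by rewrite hlp.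
case: (ltngtP i k) => hik.
- have e1 : nth [::] (leaves d (addCaret d k Tp)) i = nth [::] (leaves d Tp) i.
    by rewrite elp nth_caretL // ?hlp // hik.
  have hi2 : i < size (leaves d (addCaret d k Tp)) by rewrite hszp; lia.
  rewrite (homeo_at _ _ _ hwp' hi2); last by rewrite e1.
  rewrite e1 /clone_perm nth_mkseq; last by lia.
  have -> : ((k <= i) && (i < k + d)) = false by lia.
  rewrite hik elm -/sk nth_caretL_sh // ?hlm //; last first.
    by apply/eqP => /(hi' _ _ hi hk); lia.
  by rewrite nth_clone_maps // hik.
- have e1 : nth [::] (leaves d (addCaret d k Tp)) (i + d.-1) = nth [::] (leaves d Tp) i.
    rewrite elp nth_caretL // ?hlp //.
    have -> : (i + d.-1 < k) = false by lia.
    have -> : (i + d.-1 < k + d) = false by lia.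
    by rewrite addnK.
  have hi2 : i + d.-1 < size (leaves d (addCaret d k Tp)) by rewrite hszp; lia.
  rewrite (homeo_at _ _ _ hwp' hi2); last by rewrite e1.
  rewrite e1 /clone_perm nth_mkseq; last by lia.
  have -> : ((k <= i + d.-1) && (i + d.-1 < k + d)) = false by lia.
  have -> : (i + d.-1 < k) = false by lia.
  have -> : (i + d.-1 < k + d) = false by lia.
  rewrite addnK elm -/sk nth_caretL_sh // ?hlm //; last first.
    by apply/eqP => /(hi' _ _ hi hk); lia.
  rewrite nth_clone_maps //.
  have -> : (i + d.-1 < k) = false by lia.
  have -> : (i + d.-1 < k + d) = false by lia.
  by rewrite addnK.
- subst i.
  set v := nth [::] (leaves d Tp) k.
  set x := xi (size v).
  have e1 : nth [::] (leaves d (addCaret d k Tp)) (k + x) = rcons v x.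
    rewrite elp nth_caretL // ?hlp //.
    have -> : (k + x < k) = false by lia.
    have -> : (k + x < k + d) by rewrite ltn_add2l.
    by rewrite addKn valK.
  have hi2 : k + x < size (leaves d (addCaret d k Tp)) by rewrite hszp; have := ltn_ord x; lia.
  rewrite (homeo_at _ _ _ hwp' hi2); last first.
    by rewrite e1 /pre size_rcons mkseqS -(eqP hpre).
  rewrite e1 /clone_perm nth_mkseq; last by have := ltn_ord x; lia.
  have -> : ((k <= k + x) && (k + x < k + d)) = true by have := ltn_ord x; lia.
  rewrite addKn rhoN_ord.
  have -> : (k + rho (nth id fs k) x < k) = false by lia.
  have -> : (k + rho (nth id fs k) x < k + d) by rewrite ltn_add2l.
  rewrite addKn elm -/sk nth_caretL // ?hlm //.
  have -> : (sk + rho (nth id fs k) x < sk) = false by lia.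
  have -> : (sk + rho (nth id fs k) x < sk + d) by rewrite ltn_add2l.
  rewrite addKn valK nth_clone_maps //.
  have -> : (k + x < k) = false by lia.
  have -> : (k + x < k + d) by rewrite ltn_add2l.
  rewrite addKn valK bcat_rcons (bact_cons _ (ha k hk)) /= add0n -/x.
  congr (bcat _ (consb _ (bact _ _))).
  by apply: functional_extensionality => m; rewrite size_rcons addnS addSn.
Qed.

Lemma Phi_mult d (x y : triple d) : valid x -> valid y -> tp x = tm y ->
  Phi (mult x y) = Phi x \o Phi y.
Proof.
case: x => Tm1 s1 fs1 Tp1; case: y => Tm2 s2 fs2 Tp2.
rewrite /valid /Phi /mult /= => [[hwm1 hwp1 hlm1 hlp1 [hp1 hsz1 ha1]]] [hwm2 hwp2 hlm2 hlp2 [hp2 hsz2 ha2]] e.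
subst Tp1.
have [_ _ hb2] := (is_permP _ _).1 hp2.
apply: functional_extensionality => xi /=.
have [i [hi hpre]] := homeo_ex xi hwp2.
have hin : i < size s2 by rewrite -hlp2.
rewrite (homeo_at Tm2 s2 fs2 hwp2 hi hpre).
rewrite (homeo_at Tm1 _ _ hwp2 hi hpre).
set t := nth 0 s2 i.
have ht : t < size s2 by apply: hb2; apply: mem_nth.
have ht1 : t < size (leaves d Tm2) by rewrite hlm2.
rewrite (homeo_at Tm1 s1 fs1 hwp1 ht1 (pre_bcat _ _)) bcat_shift.
have ha1t : is_aut (nth id fs1 t) by apply: ha1; rewrite -hlp1 hlm2.
by rewrite !nth_mkseq // -/t bact_comp //; apply: ha2.
Qed.

Lemma rho_surj d (f : aut d) c : is_aut f -> exists x, rho f x = c.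
Proof.
move=> ha; have [hs _ [g fK gK]] := ha.
have hg : size (g [:: c]) = 1 by rewrite -(hs (g [:: c])) gK.
case e: (g [:: c]) hg => [|x [|y w]] // _.
exists x; have := gK [:: c]; rewrite e aut_single //; by case.
Qed.

Lemma word_eq_le d (a b : seq 'I_d) (f g : aut d) : 1 < d -> is_aut f ->
  size a <= size b ->
  (forall eta, bcat a (bact f eta) = bcat b (bact g eta)) -> a = b.
Proof.
move=> hd ha hab H.
have hd0 : 0 < d by apply: ltnW.
set o : 'I_d := Ordinal hd0.
case: (ltngtP (size a) (size b)) => h; last first.
- have := congr1 (fun e => mkseq e (size a)) (H (fun _ => o)) => /=.
  rewrite mkseq_bcat // take_size h mkseq_bcat // take_size //.
- by move: hab; rewrite leqNgt h.
set c := nth o b (size a).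
pose c' : 'I_d := if c == o then Ordinal hd else o.
have hc : c' != c.
  rewrite /c'; case: (c =P o) => [e|ne].
    by rewrite e; apply/eqP => /(congr1 val) /=.
  by apply/eqP => e; apply: ne; rewrite e.
have [x hx] := rho_surj c' ha.
have := congr1 (fun e => e (size a)) (H (fun _ => x)) => /=.
rewrite /bcat nth_default // subnn /bact /= aut_single // hx.
move=> e; rewrite /= (set_nth_default o) // -/c in e; by rewrite e eqxx in hc.
Qed.

Lemma word_eq d (a b : seq 'I_d) (f g : aut d) : 1 < d -> is_aut f -> is_aut g ->
  (forall eta, bcat a (bact f eta) = bcat b (bact g eta)) -> a = b.
Proof.
move=> hd hf hg H; case: (leqP (size a) (size b)) => h.
  exact: (word_eq_le hd hf h H).
by apply/esym; apply: (@word_eq_le d b a g f hd hg (ltnW h)) => eta; rewrite H.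
Qed.

Lemma homeo_bcat d Tm s (fs : seq (aut d)) Tp i eta : wf_tree d Tp -> i < size (leaves d Tp) ->
  homeo Tm s fs Tp (bcat (nth [::] (leaves d Tp) i) eta) =
  bcat (nth [::] (leaves d Tm) (nth 0 s i)) (bact (nth id fs i) eta).
Proof. by move=> hw hi; rewrite (homeo_at Tm s fs hw hi (pre_bcat _ _)) bcat_shift. Qed.

Lemma bcat_inj d (a : seq 'I_d) e1 e2 : bcat a e1 = bcat a e2 -> e1 = e2.
Proof. by move=> e; rewrite -(bcat_shift a e1) e bcat_shift. Qed.

Lemma Phi_same d (x y : triple d) : 1 < d -> valid x -> valid y -> tp x = tp y ->
  Phi x = Phi y -> x = y.
Proof.
case: x => Tm1 s1 fs1 Tp; case: y => Tm2 s2 fs2 Tp2; rewrite /valid /valid_with /Phi /=.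
move=> hd [hwm1 hwp hlm1 hlp1 [hp1 hsz1 ha1]] [hwm2 hwp2 hlm2 hlp2 [hp2 hsz2 ha2]] e H.
subst Tp2.
have hd0 : 0 < d by apply: ltnW.
set n := size s1 in hlm1 hlp1 hsz1 ha1 hp1 *.
have hn2 : size s2 = n by rewrite -hlp2 hlp1.
have [hu1 _ hb1] := (is_permP _ _).1 hp1.
have [hu2 _ hb2] := (is_permP _ _).1 hp2.
rewrite hn2 in hb2 ha2.
have hE : forall i eta, i < n -> bcat (nth [::] (leaves d Tm1) (nth 0 s1 i)) (bact (nth id fs1 i) eta)
    = bcat (nth [::] (leaves d Tm2) (nth 0 s2 i)) (bact (nth id fs2 i) eta).
  move=> i eta hi; have hi' : i < size (leaves d Tp) by rewrite hlp1.
  by rewrite -(@homeo_bcat d Tm1 s1 fs1 Tp i eta hwp hi') -(@homeo_bcat d Tm2 s2 fs2 Tp i eta hwp hi') H.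
have hab : forall i, i < n -> nth [::] (leaves d Tm1) (nth 0 s1 i) = nth [::] (leaves d Tm2) (nth 0 s2 i).
  move=> i hi; apply: (word_eq hd (ha1 i hi) (ha2 i hi)) => eta; exact: hE.
have hum1 := uniq_leaves hd0 hwm1; have hum2 := uniq_leaves hd0 hwm2.
have sub : {subset leaves d Tm1 <= leaves d Tm2}.
  move=> w hw; set j := index w (leaves d Tm1).
  have hj : j < n by rewrite -hlm1 index_mem.
  have hjs : j \in s1 by rewrite (perm_mem hp1) mem_iota.
  set i := index j s1.
  have hi : i < n by rewrite index_mem.
  have -> : w = nth [::] (leaves d Tm1) (nth 0 s1 i) by rewrite nth_index // nth_index.
  by rewrite hab // mem_nth // hlm2 hn2; apply: hb2; apply: mem_nth; rewrite hn2.
have hsz : size (leaves d Tm2) <= size (leaves d Tm1) by rewrite hlm1 hlm2 hn2.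
have [_ eqi] := uniq_min_size hum1 sub hsz.
have eT := leaves_inj hwm1 hwm2 (uniq_perm hum1 hum2 eqi).
subst Tm2.
have es : s1 = s2.
  apply: (eq_from_nth (x0 := 0)); first by rewrite hn2.
  move=> i hi; apply/eqP; rewrite -(nth_uniq [::] _ _ hum1) ?hab //.
    by rewrite hlm1; apply: hb1; apply: mem_nth.
  by rewrite hlm1; apply: hb2; apply: mem_nth; rewrite hn2.
subst s2.
have ef : fs1 = fs2.
  apply: (eq_from_nth (x0 := id)); first by rewrite hsz1 hsz2.
  move=> i; rewrite hsz1 => hi.
  have hb : forall eta, bact (nth id fs1 i) eta = bact (nth id fs2 i) eta.
    by move=> eta; apply: bcat_inj; apply: hE.
  apply: functional_extensionality => w.
  pose eta0 : boundary d := fun _ => Ordinal hd0.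
  by rewrite -(bact_bcat w eta0 (ha1 i hi)) -(bact_bcat w eta0 (ha2 i hi)) hb.
by subst fs2.
Qed.

Lemma nth_inj (s : seq nat) a b : uniq s -> a < size s -> b < size s ->
  nth 0 s a = nth 0 s b -> a = b.
Proof. by move=> hu ha hb /eqP; rewrite nth_uniq // => /eqP. Qed.

Lemma is_aut_comp d (f g : aut d) : is_aut f -> is_aut g -> is_aut (f \o g).
Proof.
move=> hf hg; have [hs1 _ hb1] := hf; have [hs2 hp2 hb2] := hg.
split.
- by move=> w /=; rewrite hs1 hs2.
- by move=> w x /=; rewrite -aut_take // hp2.
- exact: bij_comp.
Qed.

Lemma valid_expand d (P : aut d -> Prop) (x : triple d) k : 0 < d ->
  (forall f, P f -> is_aut f) -> (forall f x, P f -> P (section f x)) ->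
  valid_with P x -> k < size (sg x) -> valid_with P (expand k x).
Proof.
case: x => Tm s fs Tp hd hPa hPs; rewrite /valid_with /expand /=.
move=> [hwm hwp hlm hlp hw] hk.
have [hp hsz hP] := hw.
have [_ _ hb] := (is_permP _ _).1 hp.
have hsk : nth 0 s k < size s by apply: hb; apply: mem_nth.
have hkp : k < size (leaves d Tp) by rewrite hlp.
have hkm : nth 0 s k < size (leaves d Tm) by rewrite hlm.
have [hwp' elp] := leaves_addCaret hwp hkp.
have [hwm' elm] := leaves_addCaret hwm hkm.
have hcs : size (clone_perm k s fs) = size s + d.-1 by rewrite size_mkseq.
split => //.
- by rewrite elm size_caretL // hlm hcs.
- by rewrite elp size_caretL // hlp hcs.
- by rewrite hcs; apply: clone_in_wr.
Qed.

Lemma valid_mono d (P Q : aut d -> Prop) (x : triple d) : (forall f, P f -> Q f) ->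
  valid_with P x -> valid_with Q x.
Proof. by move=> h [h1 h2 h3 h4 [h5 h6 h7]]; split => //; split => // i hi; apply: h; apply: h7. Qed.

Lemma aut_id d : is_aut (@id (seq 'I_d)).
Proof. split => //; last by exists id. by move=> w x; rewrite -cats1 takel_cat // take_size. Qed.

Lemma equivT_valid d (x y : triple d) : 0 < d -> equivT x y -> (valid x <-> valid y).
Proof.
move=> hd; elim => {x y}.
- move=> x y [hv [k [hk ->]]]; split => // _.
  exact: (valid_expand hd (fun f (h : is_aut f) => h) (fun f z hf => section_aut z hf) hv hk).
- by [].
- by move=> x y _ [h1 h2]; split.
- by move=> x y z _ [h1 h2] _ [h3 h4]; split => h; [apply: h3; apply: h1 | apply: h2; apply: h4].
Qed.

Lemma equivT_Phi d (x y : triple d) : 0 < d -> equivT x y -> Phi x = Phi y.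
Proof.
move=> hd; elim => {x y}.
- by move=> x y [hv [k [hk ->]]]; rewrite Phi_expand.
- by [].
- by move=> x y _ ->.
- by move=> x y z _ -> _ ->.
Qed.

Lemma refine_tp d (P : aut d -> Prop) (x : triple d) R : 0 < d ->
  (forall f, P f -> is_aut f) -> (forall f x, P f -> P (section f x)) ->
  valid_with P x -> Ref d (tp x) R ->
  exists x', [/\ equivT x x', valid_with P x' & tp x' = R].
Proof.
move=> hd hPa hPs hv h; have [T e] : exists T, tp x = T by eexists.
rewrite e in h; move: e.
elim: h x hv => [U|U k R' hk _ IH] x hv e.
  by exists x; split => //; apply: rst_refl.
have hk' : k < size (sg x) by have [_ _ _ h4 _] := hv; rewrite -h4 e.
have hv1 := valid_expand hd hPa hPs hv hk'.
have e1 : tp (expand k x) = addCaret d k U by rewrite /expand /= e.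
have [x' [h1 h2 h3]] := IH (expand k x) hv1 e1.
exists x'; split => //; apply: rst_trans h1.
apply: rst_step; split; last by exists k.
exact: valid_mono hPa hv.
Qed.

Lemma refine_tm d (P : aut d -> Prop) (x : triple d) R : 0 < d ->
  (forall f, P f -> is_aut f) -> (forall f x, P f -> P (section f x)) ->
  valid_with P x -> Ref d (tm x) R ->
  exists x', [/\ equivT x x', valid_with P x' & tm x' = R].
Proof.
move=> hd hPa hPs hv h; have [T e] : exists T, tm x = T by eexists.
rewrite e in h; move: e.
elim: h x hv => [U|U j R' hj _ IH] x hv e.
  by exists x; split => //; apply: rst_refl.
have [_ _ h3 _ [hp _ _]] := hv.
set k := index j (sg x).
have hjs : j \in sg x by rewrite (perm_mem hp) mem_iota /= -h3 e.
have hk' : k < size (sg x) by rewrite index_mem.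
have hv1 := valid_expand hd hPa hPs hv hk'.
have e1 : tm (expand k x) = addCaret d j U by rewrite /expand /= nth_index // e.
have [x' [h1 h2 h4]] := IH (expand k x) hv1 e1.
exists x'; split => //; apply: rst_trans h1.
apply: rst_step; split; last by exists k.
exact: valid_mono hPa hv.
Qed.

Lemma faithful d (x y : triple d) : 1 < d -> valid x -> valid y -> Phi x = Phi y -> equivT x y.
Proof.
move=> hd hx hy H; have hd0 : 0 < d by apply: ltnW.
have [_ hw1 _ _ _] := hx; have [_ hw2 _ _ _] := hy.
have [R [r1 r2]] := common_ref hw1 hw2.
have hPa : forall f : aut d, is_aut f -> is_aut f by [].
have hPs : forall (f : aut d) z, is_aut f -> is_aut (section f z) by move=> f z; apply: section_aut.
have [x' [e1 v1 t1]] := refine_tp hd0 hPa hPs hx r1.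
have [y' [e2 v2 t2]] := refine_tp hd0 hPa hPs hy r2.
have exy : x' = y'.
  apply: Phi_same => //; first by rewrite t1 t2.
  by rewrite -(equivT_Phi hd0 e1) -(equivT_Phi hd0 e2).
subst y'; apply: rst_trans e1 _; exact: rst_sym.
Qed.

Lemma valid_mult d (P : aut d -> Prop) (x y : triple d) :
  (forall f g, P f -> P g -> P (f \o g)) ->
  valid_with P x -> valid_with P y -> tp x = tm y -> valid_with P (mult x y).
Proof.
case: x => Tm1 s1 fs1 Tp1; case: y => Tm2 s2 fs2 Tp2; rewrite /valid_with /mult /=.
move=> hPc [hwm1 hwp1 hlm1 hlp1 [hp1 hsz1 hP1]] [hwm2 hwp2 hlm2 hlp2 [hp2 hsz2 hP2]] e.
subst Tp1.
have hn : size s1 = size s2 by rewrite -hlp1 hlm2.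
have [hu1 _ hb1] := (is_permP _ _).1 hp1.
have [hu2 _ hb2] := (is_permP _ _).1 hp2.
have hb2' : forall i, i < size s2 -> nth 0 s2 i < size s2 by move=> i hi; apply: hb2; apply: mem_nth.
split => //; rewrite ?size_mkseq //.
- by rewrite hlm1 hn.
- split; rewrite ?size_mkseq //.
  + apply/is_permP; split; rewrite ?size_mkseq //.
    * apply/mkseq_uniqP => i j; rewrite !inE => hi hj e.
      have h1 : nth 0 s2 i < size s1 by rewrite hn hb2'.
      have h2 : nth 0 s2 j < size s1 by rewrite hn hb2'.
      exact: (nth_inj hu2 hi hj (nth_inj hu1 h1 h2 e)).
    * move=> y /mapP [i]; rewrite mem_iota add0n => /andP [_ hi] ->.
      rewrite -hn; apply: hb1; apply: mem_nth; rewrite hn; exact: hb2'.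
  + move=> i hi; rewrite nth_mkseq //; apply: hPc; last exact: hP2.
    apply: hP1; rewrite hn; exact: hb2'.
Qed.

Lemma bact_eqid d (F : aut d) e : F =1 id -> bact F e = e.
Proof. by move=> h; apply: functional_extensionality => m; rewrite /bact h nth_mkseq. Qed.

Lemma Phi_idlike d T s (hs : seq (aut d)) : wf_tree d T ->
  (forall i, i < size (leaves d T) -> nth 0 s i = i /\ nth id hs i =1 id) ->
  homeo T s hs T = id.
Proof.
move=> hw H; apply: functional_extensionality => xi.
have [i [hi hpre]] := homeo_ex xi hw.
have [e1 e2] := H i hi.
rewrite (homeo_at T s hs hw hi hpre) e1 bact_eqid //.
by rewrite {1}(eqP hpre) bcat_mkseq.
Qed.

Lemma Phi_unit d : Phi (unitT d) = id.
Proof.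
apply: Phi_idlike => // i; rewrite /= ltnS leqn0 => /eqP -> //.
Qed.

Lemma valid_unit d (P : aut d -> Prop) : P id -> valid_with P (unitT d).
Proof. by move=> h; split => //; split => // -[|i]. Qed.

Lemma inverse_exists d (G : aut d -> Prop) (x : triple d) :
  subgroup_aut G -> valid_with G x ->
  exists y, [/\ valid_with G y, tp x = tm y & Phi (mult x y) = id].
Proof.
move=> [hGa hGi hGc hGv]; case: x => Tm s fs Tp; rewrite /valid_with /=.
move=> [hwm hwp hlm hlp [hp hsz hP]].
set n := size s in hlm hlp hsz hP hp *.
have [hu _ hb] := (is_permP _ _).1 hp.
have hin : forall i, i < n -> i \in s by move=> i hi; rewrite (perm_mem hp) mem_iota.
have hix : forall i, i < n -> index i s < n by move=> i hi; rewrite index_mem hin.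
have H : forall i, i < n -> exists h, G h /\ (nth id fs (index i s)) \o h =1 id.
  move=> i hi; have [h [h1 h2 _]] := hGv _ (hP _ (hix i hi)).
  by exists h.
have [hs [hsz' hhs]] := exists_list id H.
exists (Triple Tp (mkseq (fun i => index i s) n) hs Tm); split => //=.
- split => //=; rewrite ?size_mkseq //.
  split; rewrite ?size_mkseq //.
  + apply/is_permP; split; rewrite ?size_mkseq //.
    * apply/mkseq_uniqP => i j; rewrite !inE => hi hj e.
      by rewrite -(nth_index 0 (hin i hi)) e nth_index // hin.
    * move=> y /mapP [i]; rewrite mem_iota add0n => /andP [_ hi] ->; exact: hix.
  + by move=> i hi; case: (hhs i hi).
- rewrite /Phi /mult /=; apply: Phi_idlike => // i; rewrite hlm => hi.
  rewrite size_mkseq !nth_mkseq // nth_index ?hin //; split => // w /=.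
  by case: (hhs i hi) => _ /(_ w).
Qed.

Unset Implicit Arguments.

Theorem mainTheorem2 (d : nat) (hd : 1 < d) (G : aut d -> Prop)
    (HG : subgroup_aut G) (Hss : self_similar G) :
  (forall (n : nat) (s : seq nat) (f : seq (aut d)) (k : nat),
      in_wr G n s f -> k < n ->
      in_wr G (n + d.-1) (clone_perm k s f) (clone_maps k f)) /\
  (valid_with G (unitT d) /\
   (forall x y : triple d, valid x -> valid y ->
      exists x' y', [/\ equivT x x', equivT y y' & tp x' = tm y']) /\
   (forall x y x' y' : triple d, valid_with G x -> valid_with G y ->
      equivT x x' -> equivT y y' -> tp x' = tm y' ->
      exists z, valid_with G z /\ equivT z (mult x' y')) /\
   (forall x : triple d, valid_with G x ->
      exists y x' y', [/\ valid_with G y, equivT x x', equivT y y',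
                          tp x' = tm y' & equivT (mult x' y') (unitT d)])) /\
  ((forall x y : triple d, equivT x y -> Phi x = Phi y) /\
   (forall x y : triple d, valid x -> valid y -> tp x = tm y ->
      Phi (mult x y) = Phi x \o Phi y) /\
   (forall x y : triple d, valid_with G x -> valid_with G y ->
      Phi x = Phi y -> equivT x y) /\
   (forall h, Vd G h <-> exists x : triple d, valid_with G x /\ Phi x = h)).
Proof.
have hd0 : 0 < d by apply: ltnW.
have [hGa hGi hGc hGv] := HG.
have hAa : forall f : aut d, is_aut f -> is_aut f by [].
have hAs : forall (f : aut d) z, is_aut f -> is_aut (section f z) by move=> f z; apply: section_aut.
have hAc : forall f g : aut d, is_aut f -> is_aut g -> is_aut (f \o g) by move=> f g; apply: is_aut_comp.
have hGs : forall f z, G f -> G (section f z) by move=> f z; apply: Hss.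
have vG : forall x : triple d, valid_with G x -> valid x by move=> x; apply: valid_mono.
split; first by move=> n s f k hw hk; apply: clone_in_wr.
split; first split.
- exact: valid_unit.
- split.
  + move=> x y hx hy.
    have [_ hw1 _ _ _] := hx; have [hw2 _ _ _ _] := hy.
    have [R [r1 r2]] := common_ref hw1 hw2.
    have [x' [e1 _ t1]] := refine_tp hd0 hAa hAs hx r1.
    have [y' [e2 _ t2]] := refine_tm hd0 hAa hAs hy r2.
    by exists x', y'; split => //; rewrite t1 t2.
  split.
  + move=> x y x' y' hx hy ex ey e.
    have [_ hw1 _ _ _] := hx; have [hw2 _ _ _ _] := hy.
    have [R [r1 r2]] := common_ref hw1 hw2.
    have [x1 [e1 v1 t1]] := refine_tp hd0 hGa hGs hx r1.
    have [y1 [e2 v2 t2]] := refine_tm hd0 hGa hGs hy r2.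
    have t12 : tp x1 = tm y1 by rewrite t1 t2.
    exists (mult x1 y1); split; first exact: valid_mult.
    have vx' : valid x' by apply/(equivT_valid hd0 ex); apply: vG.
    have vy' : valid y' by apply/(equivT_valid hd0 ey); apply: vG.
    apply: faithful => //.
    * by apply: valid_mult => //; apply: vG.
    * exact: valid_mult.
    * rewrite !Phi_mult //; try apply: vG => //.
      by rewrite -(equivT_Phi hd0 e1) -(equivT_Phi hd0 e2) (equivT_Phi hd0 ex) (equivT_Phi hd0 ey).
  + move=> x hx.
    have [y [hy e hP]] := inverse_exists HG hx.
    exists y, x, y; split => //; try apply: rst_refl.
    apply: faithful => //.
    * by apply: valid_mult => //; apply: vG.
    * by apply: valid_unit; apply: aut_id.
    * by rewrite hP Phi_unit.
- split; first by move=> x y; apply: equivT_Phi.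
  split; first by move=> x y; apply: Phi_mult.
  split; first by move=> x y hx hy; apply: faithful => //; apply: vG.
  move=> h; split.
  + by move=> [Tm [Tp [s [fs [hv ->]]]]]; exists (Triple Tm s fs Tp).
  + by move=> [[Tm s fs Tp] [hv <-]]; exists Tm, Tp, s, fs.
Qed.
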